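(* Each of the following cardinals is less than or equal to the next: (1) $\aleph_1$; (2) the smallest cardinality of a weakly $\mathbb{Z}^{(\omega)}$-binding group; (3) the smallest cardinality of a binding group; (4) the smallest cardinality of a self-binding group; (5) the cardinality $\mathfrak{c}=2^{\aleph_0}$ of the continuum.
   Context: All groups are abelian. $\mathbb{Z}^{\omega}$ is the product of countably many copies of $\mathbb{Z}$; $\mathbb{Z}^{(\omega)}\subseteq\mathbb{Z}^\omega$ is the subgroup of finitely supported sequences. A group is torsionless if it embeds in $\mathbb{Z}^I$ for some set $I$. Rank means torsion-free rank. A group $G$ binds a subgroup $H$ if every homomorphism from $G$ to a free abelian group maps $H$ into a group of finite rank. A torsionless group is binding if it binds some subgroup of infinite rank; it is self-binding if it has infinite rank and binds itself. A group $G$ with $\mathbb{Z}^{(\omega)}\subseteq G\subseteq\mathbb{Z}^\omega$ is weakly $\mathbb{Z}^{(\omega)}$-binding if every homomorphism $G\to\mathbb{Z}^{(\omega)}$ that extends to an endomorphism of $\mathbb{Z}^\omega$ maps $\mathbb{Z}^{(\omega)}$ to a group of finite rank. *)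

(* Defs.v *)
From Stdlib Require List.
From HB Require Import structures.
From mathcomp Require Import all_boot all_order all_algebra.
From mathcomp Require Import functions.
Set Implicit Arguments. Unset Strict Implicit. Unset Printing Implicit Defensive.
Import GRing.Theory.
Local Open Scope ring_scope.

(* All groups are abelian: modelled as MathComp zmodTypes.  For any type I,
   the function type I -> int carries the pointwise zmodType structure
   (mathcomp-classical functions.v); this is Z^I.  Z^omega = nat -> int. *)

Definition additive_map (G H : zmodType) (f : G -> H) : Prop :=
  forall x y : G, f (x - y) = f x - f y.

Definition subgroup (G : zmodType) (S : G -> Prop) : Prop :=
  S 0 /\ (forall x y, S x -> S y -> S (x - y)).

Definition Z_independent (G : zmodType) (s : seq G) : Prop :=
  forall c : seq int, size c = size s ->
    \sum_(k < size s) (nth 0 s k) *~ (nth 0 c k) = 0 ->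
    forall k, nth 0 c k = 0.

Definition finite_rank (G : zmodType) (S : G -> Prop) : Prop :=
  exists n : nat, forall s : seq G,
    (forall k, (k < size s)%N -> S (nth 0 s k)) -> Z_independent s ->
    (size s <= n)%N.

Definition infinite_rank (G : zmodType) (S : G -> Prop) : Prop :=
  ~ finite_rank S.

Definition img (A B : Type) (f : A -> B) (S : A -> Prop) : B -> Prop :=
  fun y => exists2 x, S x & f x = y.

(* finitely supported element of Z^I, i.e. element of Z^(I) *)
Definition fin_supp (I : Type) (v : I -> int) : Prop :=
  exists l : seq I, forall i, v i <> 0 -> List.In i l.

Definition torsionless (G : zmodType) : Prop :=
  exists (I : Type) (f : G -> (I -> int)), additive_map f /\ injective f.

(* G binds H: every homomorphism from G to a free abelian group (= Z^(I),
   up to isomorphism, for a set I) maps H into a group of finite rank. *)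
Definition binds (G : zmodType) (H : G -> Prop) : Prop :=
  forall (I : Type) (phi : G -> (I -> int)),
    additive_map phi -> (forall x, fin_supp (phi x)) ->
    finite_rank (img phi H).

Definition binding (G : zmodType) : Prop :=
  torsionless G /\
  exists H : G -> Prop, subgroup H /\ infinite_rank H /\ binds H.

Definition self_binding (G : zmodType) : Prop :=
  torsionless G /\ infinite_rank (fun _ : G => True) /\ binds (fun _ : G => True).

Definition Zfin : (nat -> int) -> Prop := fun v => fin_supp v.

(* G with Z^(omega) <= G <= Z^omega is weakly Z^(omega)-binding: every
   homomorphism G -> Z^(omega) extending to an endomorphism psi of Z^omega
   maps Z^(omega) to a group of finite rank. *)
Definition weakly_Zfin_binding (G : (nat -> int) -> Prop) : Prop :=
  subgroup G /\ (forall v, Zfin v -> G v) /\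
  forall psi : (nat -> int) -> (nat -> int),
    additive_map psi -> (forall v, G v -> Zfin (psi v)) ->
    finite_rank (img psi Zfin).

(* Main.v *)
Require Import Defs.
From mathcomp Require Import all_boot all_order all_algebra.
From mathcomp Require Import functions boolp.
From mathcomp Require Import zify ring lra.
Set Implicit Arguments. Unset Strict Implicit. Unset Printing Implicit Defensive.
Import Order.TTheory GRing.Theory Num.Theory.

Local Open Scope ring_scope.

Section Additive.
Variables (G H : zmodType) (f : G -> H).
Hypothesis hf : additive_map f.
Lemma am0 : f 0 = 0.
Proof. by have := hf 0 0; rewrite subr0 subrr. Qed.
Lemma amN x : f (- x) = - f x.
Proof. by have := hf 0 x; rewrite sub0r am0 sub0r. Qed.
Lemma amD x y : f (x + y) = f x + f y.
Proof. by have := hf x (- y); rewrite opprK amN opprK. Qed.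
Lemma amMn x n : f (x *+ n) = f x *+ n.
Proof. by elim: n => [|n IH]; rewrite ?mulr0n ?am0 // !mulrS amD IH. Qed.
Lemma amMz x c : f (x *~ c) = f x *~ c.
Proof.
case: c => n; first exact: amMn.
rewrite NegzE !mulrNz amN; congr (- _); exact: amMn.
Qed.
Lemma amsum I (r : seq I) (P : pred I) (F : I -> G) :
  f (\sum_(i <- r | P i) F i) = \sum_(i <- r | P i) f (F i).
Proof. exact: (big_morph f amD am0). Qed.
End Additive.

Lemma ev_add (T : Type) (K : zmodType) (t : T) : additive_map (fun x : T -> K => x t).
Proof. by []. Qed.
Lemma fmulz T (K : zmodType) (x : T -> K) c t : (x *~ c) t = x t *~ c.
Proof. exact: (amMz (@ev_add T K t)). Qed.
Lemma fsum T (K : zmodType) I (r : seq I) (P : pred I) (F : I -> T -> K) t :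
  (\sum_(i <- r | P i) F i) t = \sum_(i <- r | P i) F i t.
Proof. exact: (amsum (@ev_add T K t)). Qed.
Lemma fmulzi T (x : T -> int) c t : (x *~ c) t = x t * c.
Proof. by rewrite fmulz mulrzz. Qed.

Lemma kernel_int (n m : nat) (a : nat -> nat -> int) : (n < m)%N ->
  exists c : nat -> int, (exists2 i, (i < m)%N & c i != 0) /\
    forall j, (j < n)%N -> \sum_(i < m) a j i * c i = 0.
Proof.
elim: n m a => [|n IH] m a hnm.
  by exists (fun i => (i == 0%N)%:Z); split => //; exists 0%N.
case: m hnm => [//|m] hnm.
have hnm' : (n < m)%N by [].
case: (pselect (exists2 p, (p < n.+1)%N & a p m != 0)) => [[p hp hap]|hno].
- pose s j := if (j < p)%N then j else j.+1.
  pose b j i := a p m * a (s j) i - a (s j) m * a p i.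
  have [c' [[i0 hi0 hc0] hc']] := IH m b hnm'.
  pose cf := fun i : nat => if (i < m)%N then a p m * c' i
                   else if i == m then - \sum_(i < m) a p i * c' i else 0.
  exists cf.
  split.
    by exists i0; [apply: ltnW | rewrite /cf hi0 mulf_neq0].
  have E : forall j, \sum_(i < m.+1) a j i * cf i
          = \sum_(i < m) (a p m * a j i - a j m * a p i) * c' i.
    move=> j; rewrite big_ord_recr /= /cf ltnn eqxx mulrN mulr_sumr -sumrB.
    by apply: eq_bigr => i _; rewrite ltn_ord; ring.
  move=> j hj; rewrite E.
  case: (eqVneq j p) => [->|hjp].
    by apply: big1 => i _; ring.
  pose j' := if (j < p)%N then j else j.-1.
  have hj' : (j' < n)%N.
    have /eqP hjp' := hjp; rewrite /j'; case: (ltnP j p) => h; lia.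
  have sj : s j' = j.
    rewrite /s /j'; case: (ltnP j p) => h.
      by rewrite h.
    have hpj : (p < j)%N by rewrite ltn_neqAle eq_sym hjp h.
    have -> : (j.-1 < p)%N = false by apply/negbTE; rewrite -leqNgt; lia.
    lia.
  rewrite -[RHS](hc' j' hj'); apply: eq_bigr => i _.
  by rewrite /b sj.
- exists (fun i => (i == m)%:Z); split.
    by exists m => //; rewrite eqxx.
  move=> j hj; rewrite big_ord_recr /= eqxx big1 ?add0r.
    have : a j m = 0.
      by apply: contra_notP hno => /eqP h; exists j.
    by move=> ->; rewrite mul0r.
  by move=> i _; rewrite (ltn_eqF (ltn_ord i)) mulr0.
Qed.



Lemma indep_scale (G : zmodType) (s t : seq G) (D : nat -> int) :
  size t = size s -> (forall l, nth 0 t l = nth 0 s l *~ D l) ->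
  (forall l, (l < size s)%N -> D l != 0) -> Z_independent s -> Z_independent t.
Proof.
move=> hst ht hD hs c hc hsum k.
pose c' := mkseq (fun l => D l * nth 0 c l) (size s).
have hc'k := hs c' (size_mkseq _ _).
have hsum' : \sum_(k < size s) nth 0 s k *~ nth 0 c' k = 0.
  rewrite hst in hsum; rewrite -[RHS]hsum; apply: eq_bigr => l _.
  by rewrite nth_mkseq // ht -mulrzA.
case: (ltnP k (size s)) => hk.
  have := hc'k hsum' k; rewrite nth_mkseq // => /eqP; rewrite mulf_eq0 (negbTE (hD k hk)) /=.
  by move/eqP.
by rewrite nth_default // hc hst.
Qed.

Lemma diag_indep (u : nat -> nat -> int) (q : nat -> int) N :
  (forall n k, u n k = if k == n then q n else 0) -> (forall n, q n != 0) ->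
  Z_independent (mkseq u N).
Proof.
move=> hu hq c hc hsum k.
rewrite size_mkseq in hc hsum.
case: (ltnP k N) => hk; last by rewrite nth_default // hc.
have := congr1 (fun f => f k) hsum; rewrite fsum /=.
rewrite (bigD1 (Ordinal hk)) //= big1.
  rewrite addr0 nth_mkseq // fmulzi hu eqxx => /eqP; rewrite mulf_eq0 (negbTE (hq k)) /=.
  by move/eqP.
move=> i hik.
have hik' : (k == i) = false.
  by apply/negbTE; apply: contra hik => /eqP h; apply/eqP/val_inj.
by rewrite nth_mkseq // fmulzi hu hik' mul0r.
Qed.

Lemma dep_span (G : zmodType) (a : nat -> G) (N : nat) (s : seq G) :
  (forall l, (l < size s)%N -> exists c : nat -> int, nth 0 s l = \sum_(n < N) a n *~ c n) ->
  (N < size s)%N -> ~ Z_independent s.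
Proof.
move=> hs hN hind.
have hC : forall l, exists c : nat -> int,
    (l < size s)%N -> nth 0 s l = \sum_(n < N) a n *~ c n.
  move=> l; case: (ltnP l (size s)) => hl.
    by have [c hc] := hs l hl; exists c.
  by exists (fun _ => 0) => hl'; exfalso; lia.
pose C l := sval (cid (hC l)).
have hCs l : (l < size s)%N -> nth 0 s l = \sum_(n < N) a n *~ C l n := svalP (cid (hC l)).
have [d [[i hi hdi] hd]] := kernel_int (fun j l => C l j) hN.
suff : nth 0 (mkseq d (size s)) i = 0 by rewrite nth_mkseq // => /eqP; rewrite (negbTE hdi).
apply: (hind _ (size_mkseq _ _)).
transitivity (\sum_(k < size s) \sum_(n < N) a n *~ (C k n * d k)).
  apply: eq_bigr => k _; rewrite nth_mkseq // hCs // mulrz_suml.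
  by apply: eq_bigr => n _; rewrite mulrzA.
rewrite exchange_big /=; apply: big1 => n _.
by rewrite -mulrz_sumr hd // mulr0z.
Qed.

Section Subgroup.
Variables (G : zmodType) (K : G -> Prop).
Hypothesis hK : subgroup K.
Lemma sg0 : K 0. Proof. by case: hK. Qed.
Lemma sgB x y : K x -> K y -> K (x - y). Proof. by case: hK => _; apply. Qed.
Lemma sgN x : K x -> K (- x). Proof. by move=> h; rewrite -sub0r; apply: sgB => //; apply: sg0. Qed.
Lemma sgD x y : K x -> K y -> K (x + y).
Proof. by move=> hx hy; rewrite -[y]opprK; apply: sgB => //; apply: sgN. Qed.
Lemma sgMn x n : K x -> K (x *+ n).
Proof. by move=> hx; elim: n => [|n IH]; [rewrite mulr0n; apply: sg0 | rewrite mulrS; apply: sgD]. Qed.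
Lemma sgMz x c : K x -> K (x *~ c).
Proof. by move=> hx; case: c => n; [apply: sgMn | rewrite NegzE mulrNz; apply/sgN/sgMn]. Qed.
Lemma sgsum I (r : seq I) (P : pred I) (F : I -> G) :
  (forall i, P i -> K (F i)) -> K (\sum_(i <- r | P i) F i).
Proof.
move=> hF; elim/big_rec: _ => [|i x hi hx]; first exact: sg0.
exact: sgD (hF _ hi) hx.
Qed.
End Subgroup.

Lemma InP (T : eqType) (x : T) (s : seq T) : List.In x s <-> x \in s.
Proof.
elim: s => [//|y s IH] /=; rewrite in_cons; split.
  by case=> [->|/IH ->]; rewrite ?eqxx ?orbT.
by case/orP => [/eqP ->|/IH]; [left|right].
Qed.

Lemma In_le_sum (T : Type) (F : T -> int) (l : seq T) i :
  (forall j, 0 <= F j) -> List.In i l -> F i <= \sum_(j <- l) F j.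
Proof.
move=> h0; elim: l => [//|a l IH] /=; rewrite big_cons.
case=> [->|hi].
  by rewrite lerDl sumr_ge0.
by apply: le_trans (IH hi) _; rewrite lerDr.
Qed.

Lemma fs_bound (T : Type) (v : T -> int) : fin_supp v ->
  exists M : int, 0 <= M /\ forall i, `|v i| <= M.
Proof.
move=> [l hl]; exists (\sum_(j <- l) `|v j|); split; first exact: sumr_ge0.
move=> i; case: (eqVneq (v i) 0) => [->|hi].
  by rewrite normr0 sumr_ge0.
by apply: (@In_le_sum _ (fun j => `|v j|)) => //; apply: hl; apply/eqP.
Qed.

Lemma fun_neq0 (T : Type) (v : T -> int) : v <> 0 -> exists i, v i != 0.
Proof.
move=> hv; apply: contrapT => hn; apply: hv; apply: funext; intro i.
change (v i = 0); case: (eqVneq (v i) 0) => // hi; exfalso; apply: hn; by exists i.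
Qed.

Definition ee (n : nat) : nat -> int := fun k => (k == n)%:Z.

Lemma sum_e (c : nat -> int) m k :
  (\sum_(n < m) ee n *~ c n) k = if (k < m)%N then c k else 0.
Proof.
rewrite fsum; elim: m => [|m IH]; first by rewrite big_ord0.
rewrite big_ord_recr /= IH fmulzi /ee.
case: (ltngtP k m) => h; rewrite ?mul0r ?mul1r ?addr0 ?add0r; case: ifP => hh //; try lia.
by rewrite h.
Qed.

Section Specker.
Variables (I : Type) (phi : (nat -> int) -> (I -> int)).
Hypothesis hphi : additive_map phi.
Hypothesis hfs : forall x, fin_supp (phi x).

Definition aa n := phi (ee n).
Definition Mb n : int := sval (cid (fs_bound (hfs (ee n)))).
Lemma MbP n : 0 <= Mb n /\ forall i, `|aa n i| <= Mb n.
Proof. exact: (svalP (cid (fs_bound (hfs (ee n))))). Qed.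

Fixpoint Kp (n : nat) : int * int :=
  if n is n'.+1 then
    ((Kp n').1 * (2 * ((Kp n').2 + (Kp n').1 * Mb n') + 2), (Kp n').2 + (Kp n').1 * Mb n')
  else (1, 0).
Definition KK n := (Kp n).1.
Definition SS n := (Kp n).2.
Definition FF n := 2 * SS n.+1 + 2.

Lemma KS_rec n : SS n.+1 = SS n + KK n * Mb n /\ KK n.+1 = KK n * FF n.
Proof. by []. Qed.

Lemma KS_pos n : 0 <= SS n /\ 0 < KK n.
Proof.
elim: n => [|n [h1 h2]]; first by [].
have [e1 e2] := KS_rec n; have [hM _] := MbP n.
rewrite e2 /FF e1; split; nia.
Qed.

Lemma K_S n : 2 * SS n < KK n.
Proof.
case: n => [|n]; first by [].
have [e1 e2] := KS_rec n; have [h1 h2] := KS_pos n; have [h3 h4] := KS_pos n.+1.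
rewrite e2 /FF; nia.
Qed.

Lemma K_step n : KK n * 2 <= KK n.+1.
Proof.
have [e1 e2] := KS_rec n; have [h1 h2] := KS_pos n; have [h3 h4] := KS_pos n.+1.
by rewrite e2 /FF ler_pM2l //; lia.
Qed.

Lemma K_ge n : n%:Z < KK n.
Proof.
elim: n => [|n IH]; first by [].
have := K_step n.
have -> : (n.+1)%:Z = n%:Z + 1 by rewrite -addn1 PoszD.
lia.
Qed.

Lemma K_mono m n : (m <= n)%N -> KK m <= KK n.
Proof.
elim: n => [|n IH] hmn; first by move: hmn; rewrite leqn0 => /eqP ->.
case: (eqVneq m n.+1) => [->//|hne].
have hmn' : (m <= n)%N by move: hmn hne; rewrite leq_eqVlt => /orP[/eqP ->|]; [rewrite eqxx|].
have := IH hmn'; have := K_step n; have [h1 h2] := KS_pos n.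
lia.
Qed.

Definition PP m n := \prod_(m <= j < n) FF j.

Lemma K_prod m n : (m <= n)%N -> KK n = KK m * PP m n.
Proof.
elim: n => [|n IH] hmn.
  by move: hmn; rewrite leqn0 => /eqP ->; rewrite /PP big_geq // mulr1.
case: (eqVneq m n.+1) => [->|hne]; first by rewrite /PP big_geq // mulr1.
have hmn' : (m <= n)%N by move: hmn hne; rewrite leq_eqVlt => /orP[/eqP ->|]; [rewrite eqxx|].
have [_ e2] := KS_rec n.
by rewrite e2 IH // /PP big_nat_recr //= mulrA.
Qed.

Definition yy m : nat -> int := fun n => if (n < m)%N then 0 else PP m n.

Lemma x_dec m : (KK : nat -> int) = \sum_(n < m) ee n *~ KK n + yy m *~ KK m.
Proof.
apply: funext => k.
change (KK k = (\sum_(n < m) ee n *~ KK n) k + (yy m *~ KK m) k).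
rewrite sum_e fmulzi /yy; case: ifP => h.
  by rewrite mul0r addr0.
rewrite add0r mulrC; apply: K_prod; lia.
Qed.

Lemma y_rec m : yy m = ee m + yy m.+1 *~ FF m.
Proof.
apply: funext => k.
change (yy m k = ee m k + (yy m.+1 *~ FF m) k).
rewrite fmulzi /yy /ee; case: (ltngtP k m) => h.
- by rewrite ltnS ltnW // mul0r addr0.
- rewrite ltnNge h /= add0r /PP big_ltn //; ring.
- by rewrite h ltnSn mul0r addr0 /PP big_geq.
Qed.

Definition tt m := phi (yy m).

Lemma phix m : phi KK = \sum_(n < m) aa n *~ KK n + tt m *~ KK m.
Proof.
rewrite {1}(x_dec m) (amD hphi) (amsum hphi) (amMz hphi); congr (_ + _).
by apply: eq_bigr => n _; rewrite (amMz hphi).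
Qed.

Lemma t_rec m : tt m = aa m + tt m.+1 *~ FF m.
Proof. by rewrite /tt {1}y_rec (amD hphi) (amMz hphi). Qed.

Lemma partial_bound j i : `|(\sum_(n < j) aa n *~ KK n) i| <= SS j.
Proof.
rewrite fsum; elim: j => [|j IH]; first by rewrite big_ord0 normr0.
rewrite big_ord_recr /= fmulzi.
have [e1 _] := KS_rec j; rewrite e1.
have [hM hMi] := MbP j; have := hMi i.
have [h1 h2] := KS_pos j.
set s := \sum_(_ < _) _ in IH *.
have := ler_normD s (aa j i * KK j); rewrite normrM (gtr0_norm h2).
nia.
Qed.

Lemma slender : exists N, forall n, (N <= n)%N -> aa n = 0.
Proof.
apply: contrapT => hno.
have hinf : forall N, exists n, (N <= n)%N /\ aa n <> 0.
  move=> N; apply: contrapT => h; apply: hno; exists N => n hn.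
  by apply: contrapT => ha; apply: h; exists n.
have [B [hB0 hB]] := fs_bound (hfs KK).
pose N := absz (2 * B).
have [n [hn ha]] := hinf N.
have hKN : 2 * B < KK N.
  have : (N%:Z = 2 * B) by rewrite /N abszE ger0_norm //; lia.
  have := K_ge N; lia.
have key : forall j, (N <= j)%N -> tt j <> 0 -> False.
  move=> j hj /fun_neq0 [i /eqP hi].
  have := hB i; rewrite (phix j).
  change (`|(\sum_(n < j) aa n *~ KK n) i + (tt j *~ KK j) i| <= B -> False).
  rewrite fmulzi.
  have := partial_bound j i; have := K_S j; have := K_mono hj; have := KS_pos j.
  set s := (\sum_(_ < _) _) i.
  move=> [h1 h2]; nia.
case: (pselect (tt n = 0)) => h0; last exact: key n hn h0.
apply: (key n.+1 (leqW hn)) => h1; apply: ha.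
by have := t_rec n; rewrite h0 h1 mul0rz addr0 => ->.
Qed.

Section Tail.
Variable N : nat.
Hypothesis hN : forall n, (N <= n)%N -> aa n = 0.

Lemma tail_b (b : nat) (hb : (1 < b)%N) (w : nat -> int) :
  phi (fun n => if (n < N)%N then 0 else (b ^ n)%:Z * w n) = 0.
Proof.
set v := fun n => if (n < N)%N then 0 else (b ^ n)%:Z * w n.
have dec : forall m, (N <= m)%N -> v = \sum_(n < m) ee n *~ v n +
    (fun n => if (n < m)%N then 0 else (b ^ (n - m))%:Z * w n) *~ (b ^ m)%:Z.
  move=> m hm; apply: funext => k.
  change (v k = (\sum_(n < m) ee n *~ v n) k +
    ((fun n => if (n < m)%N then 0 else (b ^ (n - m))%:Z * w n) *~ (b ^ m)%:Z) k).
  rewrite sum_e fmulzi; case: ifP => hk; first by rewrite mul0r addr0.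
  rewrite add0r /v /=.
  have -> : (k < N)%N = false by apply/negbTE; lia.
  by rewrite mulrAC -PoszM -expnD subnK //; lia.
have key : forall m i, (N <= m)%N -> exists Q : int, phi v i = Q * (b ^ m)%:Z.
  move=> m i hm; eexists.
  rewrite {1}(dec m hm) (amD hphi) (amsum hphi) (amMz hphi) big1 ?add0r ?fmulzi //.
  move=> n _; rewrite (amMz hphi); case: (ltnP n N) => hn.
    by rewrite /v hn mulr0z.
  by rewrite -/(aa n) hN // mul0rz.
apply: funext => i; change (phi v i = 0).
apply: contrapT => hne.
pose m := maxn N (absz (phi v i)).
have [Q hQ] := key m i (leq_maxl _ _).
have h1 : (absz (phi v i) < b ^ m)%N.
  apply: (leq_ltn_trans (leq_maxr N _)); exact: ltn_expl.
have h2 : (0 < b ^ m)%N by rewrite expn_gt0; lia.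
move: h1 h2 hQ hne; move: (b ^ m)%N => X.
rewrite -!(ltz_nat) abszE => h1 h2 hQ hne.
have e : `|phi v i| = `|Q| * X%:Z by rewrite hQ normrM (gtr0_norm h2).
have hQ0 : Q != 0 by apply/eqP => h; apply: hne; rewrite hQ h mul0r.
have hQ1 : 1 <= `|Q|.
  have hh : 0 < `|Q| by rewrite normr_gt0.
  move: hh; move: (`|Q|) => q; lia.
move: hQ1 h2 h1; rewrite e; move: (`|Q|) (X%:Z) => q Y.
nia.
Qed.

Lemma tail0 (v : nat -> int) : (forall n, (n < N)%N -> v n = 0) -> phi v = 0.
Proof.
move=> hv.
pose u n := projT1 (Bezoutz (2 ^ n)%:Z (3 ^ n)%:Z).
pose w n := sval (projT2 (Bezoutz (2 ^ n)%:Z (3 ^ n)%:Z)).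
have huw n : u n * (2 ^ n)%:Z + w n * (3 ^ n)%:Z = 1.
  rewrite /u /w; case: (Bezoutz _ _) => u' [w' h] /=; rewrite h.
  have /eqP hc : coprime (2 ^ n) (3 ^ n) by rewrite coprimeXl // coprimeXr.
  by rewrite /gcdz /= hc.
have dec : v = (fun n => if (n < N)%N then 0 else (2 ^ n)%:Z * (u n * v n)) +
    (fun n => if (n < N)%N then 0 else (3 ^ n)%:Z * (w n * v n)).
  apply: funext => n.
  change (v n = (if (n < N)%N then 0 else (2 ^ n)%:Z * (u n * v n)) +
    (if (n < N)%N then 0 else (3 ^ n)%:Z * (w n * v n))).
  case: ifP => h; first by rewrite hv // addr0.
  transitivity ((u n * (2 ^ n)%:Z + w n * (3 ^ n)%:Z) * v n); first by rewrite huw mul1r.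
  ring.
by rewrite dec (amD hphi) !tail_b // addr0.
Qed.

Lemma phi_repr (v : nat -> int) : phi v = \sum_(n < N) aa n *~ v n.
Proof.
have dec : v = \sum_(n < N) ee n *~ v n + (fun n => if (n < N)%N then 0 else v n).
  apply: funext => k.
  change (v k = (\sum_(n < N) ee n *~ v n) k + (if (k < N)%N then 0 else v k)).
  by rewrite sum_e; case: ifP => _; [rewrite addr0 | rewrite add0r].
rewrite {1}dec (amD hphi) (amsum hphi) tail0 ?addr0; last by move=> n ->.
by apply: eq_bigr => n _; rewrite (amMz hphi).
Qed.
End Tail.

Lemma specker_rank : finite_rank (img phi (fun _ => True)).
Proof.
have [N hN] := slender.
exists N => s hs hind; rewrite leqNgt; apply/negP => hlt.
apply: (dep_span (a := aa) _ hlt hind).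
move=> l hl; have [v _ hv] := hs l hl.
by exists v; rewrite -hv (phi_repr hN).
Qed.
End Specker.

Lemma Zomega_self_binding : self_binding (nat -> int : zmodType).
Proof.
split; first by exists nat, (fun x => x); split => [x y|x y].
split.
  move=> [R hR]; have := hR (mkseq ee R.+1); rewrite size_mkseq ltnn => h.
  suff : false by [].
  apply: h => //.
  apply: (@diag_indep ee (fun _ => 1)) => // n k.
  by rewrite /ee; case: eqP.
move=> I phi hphi hfs; exact: specker_rank hphi hfs.
Qed.

Lemma enc_inj : exists f : (nat -> int) -> (nat -> bool), injective f.
Proof.
exists (fun x p => if (unpickle p : option (nat * int)) is Some nz then x nz.1 == nz.2 else false).
move=> x y E; apply: funext => n.
have := congr1 (fun f => f (pickle (n, x n))) E.
by rewrite /= pickleK /= eqxx => /esym/eqP.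
Qed.

Lemma fB T (K : zmodType) (x y : T -> K) k : (x - y) k = x k - y k.
Proof. by []. Qed.

Section Part1.
Variable G : (nat -> int) -> Prop.
Variable f : {v | G v} -> nat.
Hypothesis finj : injective f.

Definition gg (j : nat) : nat -> int :=
  match pselect (exists v : {v | G v}, f v = j) with
  | left h => sval (sval (cid h))
  | right _ => 0 end.

Lemma ggP (v : {v | G v}) : gg (f v) = sval v.
Proof.
rewrite /gg; destruct (pselect _) as [h|hn]; last by exfalso; apply: hn; exists v.
pose proof (proj2_sig (cid h)) as hw; simpl in hw.
by rewrite (finj hw).
Qed.

Definition cc n : nat -> int :=
  sval (cid (@kernel_int n n.+1 (fun j i => gg j (n * n + i)%N) (ltnSn n))).
Lemma ccP n : (exists2 i, (i < n.+1)%N & cc n i != 0) /\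
   forall j, (j < n)%N -> \sum_(i < n.+1) gg j (n * n + i)%N * cc n i = 0.
Proof. by rewrite /cc; case: cid. Qed.

Definition psi (v : nat -> int) : nat -> int :=
  fun n => \sum_(i < n.+1) cc n i * v (n * n + i)%N.

Lemma psi_add : additive_map psi.
Proof.
move=> x y; apply: funext => n; rewrite fB /psi -sumrB.
by apply: eq_bigr => i _; rewrite fB mulrBr.
Qed.

Lemma psi_G v : G v -> Zfin (psi v).
Proof.
move=> hv; pose w := exist G v hv; have e : gg (f w) = v := ggP w.
exists (iota 0 (f w).+1) => n hn; apply/InP; rewrite mem_iota /= add0n ltnS leqNgt.
apply/negP => hlt; apply: hn.
rewrite -e /psi; have [_ h] := ccP n.
rewrite -[RHS](h _ hlt); apply: eq_bigr => i _; by rewrite mulrC.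
Qed.

Definition zz n : nat -> int := fun k =>
  if ((n * n <= k) && (k < n * n + n.+1))%N then cc n (k - n * n)%N else 0.

Lemma zz_fin n : Zfin (zz n).
Proof.
exists (iota (n * n) n.+1) => k; rewrite /zz; case: ifP => // /andP[h1 h2] _.
by apply/InP; rewrite mem_iota h1 h2.
Qed.

Definition qq n := \sum_(i < n.+1) cc n i * cc n i.

Lemma block m n i : m != n -> (i < m.+1)%N ->
  ((n * n <= m * m + i) && (m * m + i < n * n + n.+1))%N = false.
Proof.
move=> /eqP hmn hi; apply/negbTE/negP => /andP[h1 h2].
case: (ltngtP m n) => h; [nia|nia|by []].
Qed.

Lemma psi_zz n m : psi (zz n) m = if m == n then qq n else 0.
Proof.
rewrite /psi /zz; case: eqP => [->|hmn].
  by apply: eq_bigr => i _; rewrite leq_addr ltn_add2l ltn_ord /= addKn.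
apply: big1 => i _; rewrite block ?mulr0 //; by apply/eqP.
Qed.

Lemma qq_neq0 n : qq n != 0.
Proof.
have [[i0 hi0 hc] _] := ccP n.
rewrite /qq (bigD1 (Ordinal hi0)) //=.
have h1 : 0 < cc n i0 * cc n i0 by move/eqP: hc => hc; nia.
have h2 : 0 <= \sum_(i < n.+1 | i != Ordinal hi0) cc n i * cc n i.
  by apply: sumr_ge0 => i _; nia.
move: h1 h2; move: (cc n i0 * cc n i0) (\sum_(i < n.+1 | i != Ordinal hi0) cc n i * cc n i) => p q h1 h2.
apply/eqP; lia.
Qed.

Lemma part1 : weakly_Zfin_binding G -> False.
Proof.
move=> [_ [_ hw]]; have [R hR] := hw psi psi_add psi_G.
have := hR (mkseq (fun n => psi (zz n)) R.+1); rewrite size_mkseq ltnn => h.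
suff : false by [].
apply: h.
  move=> k hk; rewrite nth_mkseq //; exists (zz k) => //; exact: zz_fin.
apply: (@diag_indep (fun n => psi (zz n)) qq) => [n k|n]; [exact: psi_zz | exact: qq_neq0].
Qed.
End Part1.

Lemma zm_swap (G : zmodType) (a b c d : G) : a + b = c + d -> a - c = d - b.
Proof. by move=> e; rewrite -[a](addrK b) e (addrC c d) addrAC addrK. Qed.
Lemma zm_id (G : zmodType) (g g' r r' : G) : g - g' = (r - r') + ((g - r) - (g' - r')).
Proof. by rewrite opprB addrACA [r + _]addrC subrK addKr. Qed.
Lemma fD T (K : zmodType) (x y : T -> K) k : (x + y) k = x k + y k.
Proof. by []. Qed.

Lemma nth_error_size (T : Type) (l : seq T) j x :
  List.nth_error l j = Some x -> (j < size l)%N.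
Proof. by elim: l j => [|a l IH] [|j] //= /IH. Qed.

Lemma In_le_max (l : seq nat) i : List.In i l -> (i <= foldr maxn 0 l)%N.
Proof.
elim: l => [//|a l IH] /= [->|h]; first exact: leq_maxl.
exact: leq_trans (IH h) (leq_maxr _ _).
Qed.

Definition evz (v : nat -> int) := exists B, forall n, (B <= n)%N -> v n = 0.

Lemma Zfin_evz z : Zfin z -> evz z.
Proof.
move=> [l hl]; exists (foldr maxn 0 l).+1 => n hn; apply: contrapT => h.
have := In_le_max (hl n h); move: hn; move: (foldr maxn 0 l) => M; lia.
Qed.

Lemma Zfin0 : Zfin 0. Proof. by exists [::]. Qed.
Lemma Zfin_sub x y : Zfin x -> Zfin y -> Zfin (x - y).
Proof.
move=> [l1 h1] [l2 h2]; exists (l1 ++ l2) => i hi; apply: List.in_or_app.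
case: (pselect (x i = 0)) => hx; last by left; apply: h1.
right; apply: h2 => hy; apply: hi; by rewrite fB hx hy subr0.
Qed.

Definition il (a b : nat -> int) : nat -> int :=
  fun n => if (n %% 2 == 1)%N then b (n %/ 2)%N else a (n %/ 2)%N.

Lemma il_evz a b : evz a -> evz b -> evz (il a b).
Proof.
move=> [Ba ha] [Bb hb]; exists (2 * (Ba + Bb))%N => n hn; rewrite /il.
case: ifP => _; [apply: hb | apply: ha]; lia.
Qed.

Lemma il_inj a b a' b' : il a b = il a' b' -> a = a' /\ b = b'.
Proof.
move=> E; split; apply: funext => n.
  have := congr1 (fun f => f (2 * n)%N) E; rewrite /il.
  have -> : ((2 * n) %% 2 == 1)%N = false by apply/negbTE; lia.
  by have -> : ((2 * n) %/ 2 = n)%N by lia.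
have := congr1 (fun f => f (2 * n).+1) E; rewrite /il.
have -> : ((2 * n).+1 %% 2 == 1)%N = true by apply/eqP; lia.
by have -> : ((2 * n).+1 %/ 2 = n)%N by lia.
Qed.

Lemma tri_zero (w : nat -> nat -> int) (s : nat -> int) n :
  (forall m j, (j < m)%N -> w m j = 0) -> (forall m, w m m != 0) ->
  (forall m, (m <= n)%N -> \sum_(j < n.+1) s j * w m j = 0) ->
  forall j, (j <= n)%N -> s j = 0.
Proof.
move=> hlow hdiag heq.
have claim : forall j, (j <= n)%N -> (forall j', (j < j')%N -> (j' <= n)%N -> s j' = 0) -> s j = 0.
  move=> j hj hup; have := heq j hj.
  rewrite (bigD1 (@Ordinal n.+1 j hj)) //= big1.
    by rewrite addr0 => /eqP; rewrite mulf_eq0 (negbTE (hdiag j)) orbF => /eqP.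
  move=> k hk; case: (ltngtP k j) => h.
  - by rewrite hlow // mulr0.
  - by rewrite hup ?mul0r // -ltnS.
  - by exfalso; move: hk => /eqP; apply; apply: val_inj.
suff H : forall t j, (n - t <= j)%N -> (j <= n)%N -> s j = 0.
  by move=> j hj; apply: (H n) => //; lia.
elim=> [|t IH] j h1 h2; apply: claim => // j' hj1 hj2.
  by exfalso; lia.
by apply: IH => //; lia.
Qed.

Section Part2.
Variables (G : zmodType) (I : Type) (f : G -> (I -> int)) (K : G -> Prop).
Hypotheses (hf : additive_map f) (finj : injective f) (hK : subgroup K)
  (hKinf : infinite_rank K) (hKb : binds K).

Lemma step_ex (l : seq I) : exists p : G * I,
  [/\ K p.1, (forall i, List.In i l -> f p.1 i = 0) & f p.1 p.2 != 0].
Proof.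
have [s [hsK hsi hsz]] : exists s : seq G, [/\ (forall k, (k < size s)%N -> K (nth 0 s k)),
    Z_independent s & (size l < size s)%N].
  apply: contrapT => hn; apply: hKinf; exists (size l) => s hs hi.
  rewrite leqNgt; apply/negP => hlt; apply: hn; by exists s.
pose A j k := if List.nth_error l j is Some i then f (nth 0 s k) i else 0.
have [d [[k0 hk0 hdk0] hd]] := @kernel_int (size l) (size s) A hsz.
pose x := \sum_(k < size s) nth 0 s k *~ d k.
have hfx i : f x i = \sum_(k < size s) f (nth 0 s k) i * d k.
  by rewrite /x (amsum hf) fsum; apply: eq_bigr => k _; rewrite (amMz hf) fmulzi.
have hx0 : x <> 0.
  move=> hx; have := hsi (mkseq d (size s)) (size_mkseq _ _) _ k0.
  rewrite nth_mkseq // => h; apply: (negP hdk0); apply/eqP; apply: h.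
  by rewrite -[RHS]hx /x; apply: eq_bigr => k _; rewrite nth_mkseq.
have hfx0 : f x <> 0.
  by move=> h; apply: hx0; apply: finj; rewrite h (am0 hf).
have [i0 hi0] := fun_neq0 hfx0.
exists (x, i0); split => //=.
  by apply: (sgsum hK) => k _; apply: (sgMz hK); apply: hsK.
move=> i hi; have [j hj] := List.In_nth_error l i hi.
have hjl := nth_error_size hj.
by rewrite hfx -[RHS](hd j hjl); apply: eq_bigr => k _; rewrite /A hj.
Qed.

Definition stp (l : seq I) : G * I := sval (cid (step_ex l)).
Lemma stpP l : [/\ K (stp l).1, (forall i, List.In i l -> f (stp l).1 i = 0)
  & f (stp l).1 (stp l).2 != 0].
Proof. by rewrite /stp; case: cid. Qed.

Fixpoint crd (m : nat) : seq I := if m is m'.+1 then (stp (crd m')).2 :: crd m' else [::].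
Definition kk m := (stp (crd m)).1.
Definition ii m := (stp (crd m)).2.

Lemma ii_in j m : (j < m)%N -> List.In (ii j) (crd m).
Proof.
elim: m => [//|m IH] hj /=.
case: (eqVneq j m) => [->|hne]; first by left.
by right; apply: IH; move/eqP: hne => hne; lia.
Qed.

Definition ww m n := f (kk m) (ii n).
Lemma ww_low m n : (n < m)%N -> ww m n = 0.
Proof. by move=> h; have [_ h2 _] := stpP (crd m); apply: h2; apply: ii_in. Qed.
Lemma ww_diag m : ww m m != 0.
Proof. by have [_ _ h] := stpP (crd m). Qed.
Lemma kkK m : K (kk m).
Proof. by have [h _ _] := stpP (crd m). Qed.

Definition rr n : nat -> int :=
  sval (cid (@kernel_int n n.+1 (fun m j => ww m j) (ltnSn n))).
Lemma rrP n : (exists2 j, (j < n.+1)%N & rr n j != 0) /\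
  forall m, (m < n)%N -> \sum_(j < n.+1) ww m j * rr n j = 0.
Proof. by rewrite /rr; case: cid. Qed.

Definition DD n := \sum_(j < n.+1) rr n j * ww n j.
Lemma DD_neq0 n : DD n != 0.
Proof.
apply/negP => /eqP h0; have [[j hj hrj] heq] := rrP n.
apply: (negP hrj); apply/eqP.
apply: (@tri_zero ww (rr n) n ww_low ww_diag) => // m hm.
case: (ltngtP m n) => h.
- by rewrite -[RHS](heq m h); apply: eq_bigr => k _; rewrite mulrC.
- by exfalso; lia.
- by rewrite h.
Qed.

Definition th (g : G) : nat -> int := fun n => \sum_(j < n.+1) rr n j * f g (ii j).

Lemma th_add : additive_map th.
Proof.
move=> x y; apply: funext => n; rewrite fB /th -sumrB.
by apply: eq_bigr => j _; rewrite (hf x y) fB mulrBr.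
Qed.

Lemma th_kk m : th (kk m) = ee m *~ DD m.
Proof.
apply: funext => n; rewrite fmulzi /ee /th.
case: (ltngtP m n) => h.
- rewrite mul0r -[RHS]((proj2 (rrP n)) m h); apply: eq_bigr => k _; by rewrite mulrC.
- rewrite mul0r; apply: big1 => j _.
  have e : ww m j = 0 by apply: ww_low; exact: leq_trans (ltn_ord j) h.
  by rewrite /ww in e; rewrite e mulr0.
- by rewrite h mul1r.
Qed.

Lemma th_span N c : th (\sum_(n < N) kk n *~ c n) = \sum_(n < N) ee n *~ (DD n * c n).
Proof.
rewrite (amsum th_add); apply: eq_bigr => n _.
by rewrite (amMz th_add) th_kk -mulrzA.
Qed.

Definition H2 (v : nat -> int) : Prop := exists g z, Zfin z /\ v = th g + z.

Lemma scale_ex (z : nat -> int) : Zfin z ->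
  exists D : int, exists k, [/\ D != 0, K k & th k = z *~ D].
Proof.
move=> [l hl]; elim: l z hl => [|a l IH] z hz.
  exists 1, 0; split => //; first exact: (sg0 hK).
  have -> : z = 0.
    apply: funext => i; change (z i = 0); apply: contrapT => h; exact: (hz i h).
  by rewrite (am0 th_add) mul0rz.
pose z' := fun i => if i == a then 0 else z i.
have hz' : forall i, z' i <> 0 -> List.In i l.
  move=> i; rewrite /z'; case: eqP => // hia h.
  by case: (hz i h) => // e; exfalso; apply: hia.
have [D' [k' [hD' hk' e']]] := IH z' hz'.
exists (D' * DD a), (k' *~ DD a + kk a *~ (z a * D')).
split.
- by rewrite mulf_neq0 // DD_neq0.
- by apply: (sgD hK); apply: (sgMz hK) => //; apply: kkK.
rewrite (amD th_add) !(amMz th_add) e' th_kk.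
apply: funext => i; rewrite fD !fmulzi /z' /ee.
case: (eqVneq i a) => [->|hne] /=; first by rewrite ?eqxx /=; ring.
by rewrite ?(negbTE hne) /=; ring.
Qed.

Lemma H2_wb : weakly_Zfin_binding H2.
Proof.
split.
  split; first by exists 0, 0; split; [exact: Zfin0 | rewrite (am0 th_add) addr0].
  move=> x y [g1 [z1 [hz1 ->]]] [g2 [z2 [hz2 ->]]].
  exists (g1 - g2), (z1 - z2); split; first exact: Zfin_sub.
  by rewrite (th_add g1 g2) opprD addrACA.
split.
  by move=> v hv; exists 0, v; split => //; rewrite (am0 th_add) add0r.
move=> psi hpsi hpsiH.
have hphi : additive_map (fun g => psi (th g)).
  by move=> x y; rewrite (th_add x y) hpsi.
have hphifs : forall g, fin_supp (psi (th g)).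
  by move=> g; apply: hpsiH; exists g, 0; split; [exact: Zfin0 | rewrite addr0].
have [R hR] := hKb hphi hphifs.
exists R => s hs hind.
have gen : forall s : seq (nat -> int), (forall k, (k < size s)%N -> img psi Zfin (nth 0 s k)) ->
    exists t (D : nat -> int), [/\ size t = size s,
      forall l, (l < size t)%N -> img (fun g => psi (th g)) K (nth 0 t l),
      forall l, nth 0 t l = nth 0 s l *~ D l &
      forall l, (l < size s)%N -> D l != 0].
  elim=> [|u s' IH] hs'.
    by exists [::], (fun _ => 1); split => // l; rewrite nth_nil mul0rz.
  have [z hz hzu] := hs' 0%N isT.
  have [D0 [k0 [hD0 hk0 e0]]] := scale_ex hz.
  have [t' [D' [h1 h2 h3 h4]]] := IH (fun k hk => hs' k.+1 hk).
  exists ((u *~ D0) :: t'), (fun l => if l is l'.+1 then D' l' else D0); split => //=.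
  - by rewrite h1.
  - case=> [_|l hl] /=; last exact: h2.
    by exists k0 => //; rewrite e0 (amMz hpsi) hzu.
  - by case.
  - by case.
have [t [D [h1 h2 h3 h4]]] := gen s hs.
rewrite -h1; apply: hR => //.
exact: (indep_scale h1 h3 h4 hind).
Qed.

Definition Fsp (x : G) := exists N (c : nat -> int), x = \sum_(n < N) kk n *~ c n.

Lemma widen N M (c : nat -> int) : (N <= M)%N ->
  \sum_(n < N) kk n *~ c n = \sum_(n < M) kk n *~ (if (n < N)%N then c n else 0).
Proof.
move=> h; rewrite (big_ord_widen M (fun n => kk n *~ c n) h) big_mkcond.
by apply: eq_bigr => n _; case: ifP => _ //; rewrite mulr0z.
Qed.

Lemma Fsp0 : Fsp 0.
Proof. by exists 0%N, (fun _ => 0); rewrite big_ord0. Qed.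
Lemma Fsp_sub x y : Fsp x -> Fsp y -> Fsp (x - y).
Proof.
move=> [N1 [c1 ->]] [N2 [c2 ->]].
exists (maxn N1 N2), (fun n => (if (n < N1)%N then c1 n else 0) - (if (n < N2)%N then c2 n else 0)).
rewrite (widen c1 (leq_maxl N1 N2)) (widen c2 (leq_maxr N1 N2)) -sumrB.
by apply: eq_bigr => n _; rewrite mulrzBr.
Qed.
Lemma Fsp_N x : Fsp x -> Fsp (- x).
Proof. by move=> h; rewrite -sub0r; apply: Fsp_sub => //; apply: Fsp0. Qed.
Lemma Fsp_D x y : Fsp x -> Fsp y -> Fsp (x + y).
Proof. by move=> hx hy; rewrite -[y]opprK; apply: Fsp_sub => //; apply: Fsp_N. Qed.

Lemma th_Fsp0 x : Fsp x -> th x = 0 -> x = 0.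
Proof.
move=> [N [c ->]] h; rewrite th_span in h.
apply: big1 => n _.
have : (\sum_(k < N) ee k *~ (DD k * c k)) n = (0 : nat -> int) n by rewrite h.
rewrite (sum_e (fun k => DD k * c k)) ltn_ord => e.
have e' : DD n * c n = 0 := e.
by move/eqP: e'; rewrite mulf_eq0 (negbTE (DD_neq0 n)) /= => /eqP ->; rewrite mulr0z.
Qed.

Lemma th_Fsp_evz x : Fsp x -> evz (th x).
Proof.
move=> [N [c ->]]; exists N => n hn; rewrite th_span (sum_e (fun k => DD k * c k)).
by have -> : (n < N)%N = false by apply/negbTE; lia.
Qed.

Definition bnd (v : nat -> int) : nat :=
  match pselect (evz v) with left h => sval (cid h) | right _ => 0%N end.
Lemma bndP v : evz v -> forall n, (bnd v <= n)%N -> v n = 0.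
Proof.
move=> hv; rewrite /bnd; destruct (pselect (evz v)) as [h|hn]; last by [].
exact: (proj2_sig (cid h)).
Qed.

Definition JJ v := \sum_(n < bnd v) kk n *~ v n.
Lemma JJ_Fsp v : Fsp (JJ v). Proof. by exists (bnd v), v. Qed.
Lemma th_JJ v : evz v -> forall m, th (JJ v) m = DD m * v m.
Proof.
move=> hv m; rewrite /JJ th_span (sum_e (fun k => DD k * v k)); case: ifP => // h.
by rewrite (bndP hv) ?mulr0 // leqNgt h.
Qed.
Lemma JJ_inj v v' : evz v -> evz v' -> JJ v = JJ v' -> v = v'.
Proof.
move=> hv hv' E; apply: funext => m.
have := congr1 (fun x => th x m) E; rewrite /= !th_JJ // => /eqP.
rewrite -subr_eq0 -mulrBr mulf_eq0 (negbTE (DD_neq0 m)) subr_eq0 /=.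
by move/eqP.
Qed.

Lemma ex_rep (g : G) : exists y, Fsp (y - g).
Proof. by exists g; rewrite subrr; apply: Fsp0. Qed.
Definition rep (g : G) : G := sval (cid (ex_rep g)).
Lemma repP g : Fsp (rep g - g).
Proof. exact: (proj2_sig (cid (ex_rep g))). Qed.
Lemma rep_eq g g' : Fsp (g - g') -> rep g = rep g'.
Proof.
move=> h.
have E : (fun y => Fsp (y - g)) = (fun y => Fsp (y - g')).
  apply: funext => y; apply: propext; split => hy.
    have -> : y - g' = (y - g) + (g - g') by rewrite addrA subrK.
    exact: Fsp_D.
  have -> : y - g = (y - g') - (g - g') by rewrite opprB addrA subrK.
  exact: Fsp_sub.
rewrite /rep; move: (ex_rep g) (ex_rep g'); rewrite E => h1 h2.
by rewrite (Prop_irrelevance h1 h2).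
Qed.

Definition Psi (g : G) (z : nat -> int) : G := rep g + JJ (il (th (g - rep g)) z).

Lemma Psi_inj g z g' z' : Zfin z -> Zfin z' -> Psi g z = Psi g' z' -> g = g' /\ z = z'.
Proof.
move=> hz hz' E.
have hF : forall g, Fsp (g - rep g).
  by move=> g0; rewrite -opprB; apply: Fsp_N; apply: repP.
have hev : forall g0 z0, Zfin z0 -> evz (il (th (g0 - rep g0)) z0).
  by move=> g0 z0 h0; apply: il_evz; [apply: th_Fsp_evz | apply: Zfin_evz].
have e1 := zm_swap E.
have hr : Fsp (rep g - rep g') by rewrite e1; apply: Fsp_sub; apply: JJ_Fsp.
have hrr : rep g = rep g'.
  apply: rep_eq; rewrite (zm_id g g' (rep g) (rep g')).
  by apply: Fsp_D => //; apply: Fsp_sub.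
have hv1 := hev g z hz; have hv2 := hev g' z' hz'; rewrite hrr in hv1.
move: E; rewrite /Psi hrr => /addrI /(JJ_inj hv1 hv2) /il_inj [ea ->].
split => //.
have : (g - rep g') - (g' - rep g') = 0.
  apply: th_Fsp0; first by apply: Fsp_sub; [rewrite -hrr; apply: hF | apply: hF].
  by rewrite (th_add (g - rep g')) ea subrr.
by move/eqP; rewrite subr_eq0 => /eqP /addIr.
Qed.

Lemma pick_ex v : H2 v -> exists p : G * (nat -> int), Zfin p.2 /\ v = th p.1 + p.2.
Proof. by move=> [g [z [h1 h2]]]; exists (g, z). Qed.
Definition pk v (hv : H2 v) := sval (cid (pick_ex hv)).
Lemma pkP v (hv : H2 v) : Zfin (pk hv).2 /\ v = th (pk hv).1 + (pk hv).2.
Proof. exact: (proj2_sig (cid (pick_ex hv))). Qed.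

Lemma part2 : exists H : (nat -> int) -> Prop, weakly_Zfin_binding H /\
  exists f : {v | H v} -> G, injective f.
Proof.
exists H2; split; first exact: H2_wb.
exists (fun h => Psi (pk (proj2_sig h)).1 (pk (proj2_sig h)).2).
move=> [v1 hv1] [v2 hv2] /= E.
have [hz1 e1] := pkP hv1; have [hz2 e2] := pkP hv2.
have [g12 z12] := Psi_inj hz1 hz2 E.
have ev : v1 = v2 by rewrite e1 e2 g12 z12.
subst v2; by rewrite (Prop_irrelevance hv1 hv2).
Qed.
End Part2.

Close Scope ring_scope.

(* Cardinal comparison
   |A| <= |B| is rendered as existence of an injection A -> B. *)
Theorem corollary5 :
  (* aleph_1 <= kappa_wb : every weakly Z^(omega)-binding group is uncountable *)
  (forall G : (nat -> int) -> Prop, weakly_Zfin_binding G ->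
     ~ exists f : {v | G v} -> nat, injective f) /\
  (* kappa_wb <= kappa_b *)
  (forall G : zmodType, binding G ->
     exists H : (nat -> int) -> Prop, weakly_Zfin_binding H /\
       exists f : {v | H v} -> G, injective f) /\
  (* kappa_b <= kappa_sb *)
  (forall G : zmodType, self_binding G ->
     exists H : zmodType, binding H /\ exists f : H -> G, injective f) /\
  (* kappa_sb <= continuum = |nat -> bool| *)
  (exists G : zmodType, self_binding G /\
     exists f : G -> (nat -> bool), injective f).
Proof.
split.
  by move=> G hG [f hf]; exact: (part1 hf hG).
split.
  move=> G [[I [f [hf finj]]] [K [hK [hKinf hKb]]]].
  exact: (part2 hf finj hK hKinf hKb).
split.
  move=> G hG; exists G; split; last by exists id.
  case: hG => ht [hinf hb]; split => //; exists (fun _ => True).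
  by split => //; split.
exists (nat -> int : zmodType); split; first exact: Zomega_self_binding.
exact: enc_inj.
Qed.
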